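(* Let $A=\mathbb{R}^4_\theta$ with its Riemannian structure $(g,(\nabla,\sigma))$, and $B=A/(f)$ the noncommutative hypersurface with $\nu=\mathrm{d}f$, as in the context. Then (A1) $\sigma(\omega\otimes_A\nu)=\nu\otimes_A\omega$ and $\sigma(\nu\otimes_A\omega)=\omega\otimes_A\nu$ for all $\omega\in\Omega^1_A$, and (A2) $\sigma\circ(\Pi\otimes_B\mathrm{id})=(\mathrm{id}\otimes_B\Pi)\circ\sigma$ and $\sigma\circ(\mathrm{id}\otimes_B\Pi)=(\Pi\otimes_B\mathrm{id})\circ\sigma$ on $q_!(\Omega^1_A)\otimes_Bq_!(\Omega^1_A)$ hold. The induced Riemannian structure $(g_B,(\nabla_B,\sigma_B))$ on $(\Omega^1_B,\mathrm{d}_B)$ is explicitly given (all expressions denoting classes) by $g_B=\sum_{i,j}g_{ij}\,\mathrm{d}z^i\otimes_B\mathrm{d}z^j$, $g_B^{-1}(\mathrm{d}z^i\otimes_B\mathrm{d}z^j)=g^{ij}-z^iz^j$, $\nabla_B(\mathrm{d}z^i)=-z^i\sum_{k,l}g_{kl}\,\mathrm{d}z^k\otimes_B\mathrm{d}z^l$, $\sigma_B(\mathrm{d}z^i\otimes_B\mathrm{d}z^j)=R^{ji}\,\mathrm{d}z^j\otimes_B\mathrm{d}z^i$.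
   Context: $\theta\in\mathbb{R}$; $R=(R^{ab})$ (row $a$, column $b$) with rows $(1,e^{-i\theta},1,e^{i\theta})$, $(e^{i\theta},1,e^{-i\theta},1)$, $(1,e^{i\theta},1,e^{-i\theta})$, $(e^{-i\theta},1,e^{i\theta},1)$; $A=\mathbb{C}\langle z^1,\dots,z^4\rangle/(z^iz^j-R^{ji}z^jz^i)$; $\Omega^1_A=\bigoplus_iA\,\mathrm{d}z^i$ free left module with $\mathrm{d}z^i\,z^j=R^{ji}z^j\mathrm{d}z^i$, $\mathrm{d}$ the Leibniz extension of $z^i\mapsto\mathrm{d}z^i$. $P$ the matrix with rows $(0,0,1,0),(0,0,0,1),(1,0,0,0),(0,1,0,0)$; $(g_{ij})=\tfrac12P$, $(g^{ij})=2P$; $g=\sum g_{ij}\mathrm{d}z^i\otimes_A\mathrm{d}z^j$, $g^{-1}(\mathrm{d}z^i\otimes_A\mathrm{d}z^j)=g^{ij}$; $\nabla(\sum a_i\mathrm{d}z^i)=\sum\mathrm{d}a_i\otimes_A\mathrm{d}z^i$; $\sigma$ left $A$-linear with $\sigma(\mathrm{d}z^i\otimes_A\mathrm{d}z^j)=R^{ji}\mathrm{d}z^j\otimes_A\mathrm{d}z^i$. $f=\tfrac12(z^1z^3+z^2z^4-1)$, central; $B=A/(f)$, $q:A\to B$, classes $[\cdot]$; $\nu=\mathrm{d}f=\sum g_{ij}z^i\mathrm{d}z^j$ (central, $[g^{-1}(\nu\otimes\nu)]=1$). $q_!(\Omega^1_A)=\Omega^1_A/(f\Omega^1_A+\Omega^1_Af)$;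 $\Omega^1_B=q_!(\Omega^1_A)/N^1_B$ with $N^1_B$ the $B$-subbimodule generated by $[\mathrm{d}a]$, $a\in(f)$; $\mathrm{d}_B[a]=[\mathrm{d}a]$. $\Pi[\omega]=[\omega-g^{-1}(\omega\otimes_A\nu)\nu]$ on $q_!(\Omega^1_A)$, inducing a section $\Pi:\Omega^1_B\to q_!(\Omega^1_A)$ of the quotient map; $\sigma$ and $\nabla$ descend to classes. Induced structure: $g_B$ is the image of $[g]$ in $\Omega^1_B\otimes_B\Omega^1_B$; $g_B^{-1}([\omega]\otimes_B[\zeta])=[g^{-1}(\Pi(\omega)\otimes_A\Pi(\zeta))]$; $\nabla_B([\omega])$ the image of $[\nabla(\Pi(\omega))]$ in $\Omega^1_B\otimes_B\Omega^1_B$; $\sigma_B([\omega]\otimes_B[\zeta])=[\sigma(\omega\otimes_A\zeta)]$. *)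

(* Defs.v *)
From HB Require Import structures.
From mathcomp Require Import all_boot all_order all_algebra.
From mathcomp Require Import reals trigo.
From mathcomp Require Import complex.
Set Implicit Arguments. Unset Strict Implicit. Unset Printing Implicit Defensive.
Import Order.TTheory GRing.Theory Num.Theory.
Local Open Scope ring_scope.

(* Model.  Indices 'I_4 = {0,1,2,3} stand for the paper's 1,2,3,4.            *)
(*  - The free algebra C<z^1..z^4>: formal finite linear combinations of      *)
(*    words, FA := seq (C * word); two such are the same element of the free  *)
(*    algebra iff they have the same coefficient on every word (coefFA).      *)
(*  - A = C<z>/(z^i z^j - R^{ji} z^j z^i) and B = A/(f): an element of A (B)  *)
(*    is represented by an element of the free algebra; equality in A (B) is  *)
(*    congruence modulo the two-sided ideal generated by the relations        *)
(*    (resp. the relations and f).                                            *)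
(*  - Omega^1_A, a free left A-module with basis dz^i, is represented by the  *)
(*    coefficient 4-tuples; Omega^1_A (x)_A Omega^1_A (free left A-module on  *)
(*    dz^i (x) dz^j) by 4x4 coefficient families.                             *)

Definition word := seq 'I_4.

Section Model.
Variable R : realType.
Local Notation C := (R[i]).

Definition FA := seq (C * word).

Definition coefFA (p : FA) (w : word) : C :=
  \sum_(t <- p) (if t.2 == w then t.1 else 0).

Definition faC (c : C) : FA := [:: (c, [::])].
Definition fa0 : FA := [::].
Definition fa1 : FA := faC 1.
Definition faz (i : 'I_4) : FA := [:: (1, [:: i])].
Definition faadd (p q : FA) : FA := p ++ q.
Definition fascale (c : C) (p : FA) : FA := [seq (c * t.1, t.2) | t <- p].
Definition faopp (p : FA) : FA := fascale (-1) p.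
Definition fasub (p q : FA) : FA := faadd p (faopp q).
Definition famul (p q : FA) : FA :=
  [seq (t.1 * s.1, t.2 ++ s.2) | t <- p, s <- q].
Definition fasum (F : 'I_4 -> FA) : FA := \big[cat/[::]]_(k < 4) F k.

Definition in_ideal (I : Type) (G : I -> FA) (p : FA) : Prop :=
  exists s : seq (FA * I * FA),
    forall w, coefFA p w =
      coefFA (flatten [seq famul (famul t.1.1 (G t.1.2)) t.2 | t <- s]) w.

Variable theta : R.

Definition expi (x : R) : C := (cos x +i* sin x)%C.

(* the matrix R = (R^{ab}) (row a, column b) *)
Definition Rm (a b : 'I_4) : C :=
  let q := expi theta in let qb := expi (- theta) in
  nth 0 (nth [::] [:: [:: 1; qb; 1; q]; [:: q; 1; qb; 1];
                      [:: 1; q; 1; qb]; [:: qb; 1; q; 1]] a) b.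

Definition Pm (i j : 'I_4) : C := if (val j == (val i + 2) %% 4)%N then 1 else 0.
Definition gC (i j : 'I_4) : C := Pm i j / 2.
Definition ginvC (i j : 'I_4) : C := 2 * Pm i j.

Definition relA (ij : 'I_4 * 'I_4) : FA :=
  fasub (famul (faz ij.1) (faz ij.2))
        (fascale (Rm ij.2 ij.1) (famul (faz ij.2) (faz ij.1))).

Definition fA : FA :=
  fascale (1 / 2) (fasub (faadd (famul (faz (inord 0)) (faz (inord 2)))
                                 (famul (faz (inord 1)) (faz (inord 3)))) fa1).

Definition relB (o : option ('I_4 * 'I_4)) : FA :=
  if o is Some ij then relA ij else fA.

Definition eqA (p q : FA) : Prop := in_ideal relA (fasub p q).
Definition eqB (p q : FA) : Prop := in_ideal relB (fasub p q).

Definition Om1 := 'I_4 -> FA.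
Definition Om2 := 'I_4 -> 'I_4 -> FA.

Definition dzv (i : 'I_4) : Om1 := fun k => if k == i then fa1 else fa0.
Definition lmul1 (a : FA) (w : Om1) : Om1 := fun k => famul a (w k).
Definition sub1 (w v : Om1) : Om1 := fun k => fasub (w k) (v k).
Definition lmul2 (a : FA) (X : Om2) : Om2 := fun i j => famul a (X i j).
Definition scale2 (c : C) (X : Om2) : Om2 := fun i j => fascale c (X i j).
Definition sum2 (F : 'I_4 -> Om2) : Om2 := fun i j => fasum (fun k => F k i j).
Definition add2 (X Y : Om2) : Om2 := fun i j => faadd (X i j) (Y i j).

(* dz^i b = tw_i(b) dz^i, with tw_i(z^k) = R^{ki} z^k *)
Definition twist (i : 'I_4) (p : FA) : FA :=
  [seq (t.1 * \prod_(l <- t.2) Rm l i, t.2) | t <- p].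

(* (sum_i a_i dz^i) (x)_A (sum_j b_j dz^j) = sum_{ij} a_i tw_i(b_j) dz^i(x)dz^j *)
Definition tens (w v : Om1) : Om2 := fun i j => famul (w i) (twist i (v j)).

(* d : Leibniz extension of z^i |-> dz^i *)
Definition dword (w : word) (k : 'I_4) : FA :=
  [seq (\prod_(l <- drop n.+1 w) Rm l k, take n w ++ drop n.+1 w)
     | n <- iota 0 (size w) & nth k w n == k].
Definition dA (p : FA) : Om1 :=
  fun k => flatten [seq fascale t.1 (dword t.2 k) | t <- p].

Definition nu : Om1 := dA fA.

Definition gT : Om2 := fun i j => faC (gC i j).
Definition ginv (X : Om2) : FA :=
  fasum (fun i => fasum (fun j => fascale (ginvC i j) (X i j))).
Definition nabla (w : Om1) : Om2 := sum2 (fun k => tens (dA (w k)) (dzv k)).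
Definition sigma (X : Om2) : Om2 := fun i j => fascale (Rm i j) (X j i).

Definition Pi (w : Om1) : Om1 := sub1 w (lmul1 (ginv (tens w nu)) nu).

Definition piL (X : Om2) : Om2 := sum2 (fun j => tens (Pi (fun k => X k j)) (dzv j)).
Definition piR (X : Om2) : Om2 :=
  sum2 (fun i => sum2 (fun j => lmul2 (X i j) (tens (dzv i) (Pi (dzv j))))).

(* equalities in Omega^1_A (x)_A Omega^1_A, in q_!(Omega^1_A) (x)_B q_!(Omega^1_A),
   and in Omega^1_B (x)_B Omega^1_B = quotient of the latter by the images of
   N^1_B (x) - and - (x) N^1_B, where N^1_B = B nu. *)
Definition eqO2A (X Y : Om2) : Prop := forall i j, eqA (X i j) (Y i j).
Definition eqQ (X Y : Om2) : Prop := forall i j, eqB (X i j) (Y i j).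
Definition eqBB (X Y : Om2) : Prop :=
  exists w v : Om1, forall i j,
    eqB (fasub (X i j) (Y i j)) (faadd (tens nu v i j) (tens w nu i j)).

Definition gB : Om2 := gT.
Definition gBinv (w v : Om1) : FA := ginv (tens (Pi w) (Pi v)).
Definition nablaB (w : Om1) : Om2 := nabla (Pi w).
Definition sigmaB (X : Om2) : Om2 := sigma X.

End Model.

(* Main.v *)
Require Import Defs.
From HB Require Import structures.
From mathcomp Require Import all_boot all_order all_algebra.
From mathcomp Require Import reals trigo.
From mathcomp Require Import complex.
From mathcomp Require Import ring.
From Corelib Require Import Setoid Morphisms.
Set Implicit Arguments. Unset Strict Implicit. Unset Printing Implicit Defensive.
Import GRing.Theory Num.Theory.
Local Open Scope ring_scope.

Section S.
Variable R : realType.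
Variable theta : R.
Local Notation C := (R[i]).
Local Notation FA := (FA R).

Definition lin (p : FA) (D : word -> C) : C := \sum_(t <- p) t.1 * D t.2.

Lemma coefE p w : coefFA p w = lin p (fun u => (u == w)%:R).
Proof. by apply: eq_bigr => t _; case: eqP; rewrite ?mulr1 ?mulr0. Qed.

Lemma lin_nil D : lin [::] D = 0. Proof. by rewrite /lin big_nil. Qed.
Lemma lin_cons t p D : lin (t :: p) D = t.1 * D t.2 + lin p D.
Proof. by rewrite /lin big_cons. Qed.
Lemma lin_cat p q D : lin (p ++ q) D = lin p D + lin q D.
Proof. by rewrite /lin big_cat. Qed.
Lemma lin_scale c p D : lin (fascale c p) D = c * lin p D.
Proof. by rewrite /lin big_map mulr_sumr; apply: eq_bigr => t _; rewrite mulrA. Qed.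
Lemma lin_flatten L D : lin (flatten L) D = \sum_(p <- L) lin p D.
Proof. by elim: L => [|p L IH]; rewrite ?big_nil ?lin_nil // big_cons /= lin_cat IH. Qed.
Lemma lin_famul p q D : lin (famul p q) D = lin p (fun u => lin q (fun v => D (u ++ v))).
Proof.
elim: p => [|t p IH]; first by rewrite /famul /= !lin_nil.
rewrite /famul /= lin_cat -/(famul p q) IH lin_cons; congr (_ + _).
rewrite /lin big_map mulr_sumr; apply: eq_bigr => s _ /=; by rewrite mulrA.
Qed.
Lemma lin_twist i p D : lin (twist theta i p) D = lin p (fun u => (\prod_(l <- u) Rm theta l i) * D u).
Proof. by rewrite /lin big_map; apply: eq_bigr => t _ /=; rewrite mulrA. Qed.
Lemma lin_ext p D1 D2 : (forall u, D1 u = D2 u) -> lin p D1 = lin p D2.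
Proof. by move=> H; apply: eq_bigr => t _; rewrite H. Qed.
Lemma lin_add p D1 D2 : lin p (fun u => D1 u + D2 u) = lin p D1 + lin p D2.
Proof. by rewrite /lin -big_split; apply: eq_bigr => t _; rewrite mulrDr. Qed.
Lemma lin_mulc p c D : lin p (fun u => c * D u) = c * lin p D.
Proof. by rewrite /lin mulr_sumr; apply: eq_bigr => t _; rewrite mulrCA. Qed.
Lemma lin_0 p : lin p (fun _ => 0) = 0.
Proof. by rewrite /lin big1 // => t _; rewrite mulr0. Qed.
Lemma lin_sum (I : Type) (r : seq I) p (F : I -> word -> C) :
  lin p (fun u => \sum_(k <- r) F k u) = \sum_(k <- r) lin p (F k).
Proof. elim: r => [|k r IH]; first by rewrite big_nil (lin_ext _ (fun u => big_nil _ _ _ _)) lin_0.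
rewrite big_cons -IH -lin_add; apply: lin_ext => u; by rewrite big_cons. Qed.

Definition eqc (p q : FA) := forall w, coefFA p w = coefFA q w.

Lemma lin_sel p (S : seq word) D : uniq S -> {subset map snd p <= S} ->
  lin p D = \sum_(u <- S) coefFA p u * D u.
Proof.
move=> uS sub.
rewrite /lin.
transitivity (\sum_(t <- p) \sum_(u <- S) (t.1 * (t.2 == u)%:R) * D u).
  apply: eq_big_seq => t tp.
  have tS : t.2 \in S by apply: sub; apply: map_f.
  rewrite (bigD1_seq t.2) //= eqxx mulr1 big1 ?addr0 // => u /negbTE.
  by rewrite eq_sym => ->; rewrite mulr0 mul0r.
rewrite exchange_big; apply: eq_bigr => u _.
rewrite /coefFA mulr_suml; apply: eq_bigr => t _.
by case: eqP; rewrite ?mulr1 ?mulr0 ?mul0r.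
Qed.

Lemma lin_eqc p q D : eqc p q -> lin p D = lin q D.
Proof.
move=> E.
set S := undup (map snd p ++ map snd q).
rewrite (@lin_sel p S) ?undup_uniq //; last by move=> u up; rewrite mem_undup mem_cat up.
rewrite (@lin_sel q S) ?undup_uniq //; last by move=> u up; rewrite mem_undup mem_cat up orbT.
by apply: eq_bigr => u _; rewrite E.
Qed.


Lemma eqcP p q : (forall D, lin p D = lin q D) -> eqc p q.
Proof. by move=> H w; rewrite !coefE H. Qed.

Lemma lin_fasum (F : 'I_4 -> FA) D : lin (fasum F) D = \sum_(k < 4) lin (F k) D.
Proof. by rewrite /fasum (big_morph (fun p => lin p D) (fun p q => lin_cat p q D) (lin_nil D)). Qed.

Definition linF (p : FA) (D : seq nat -> C) := foldr (fun t acc => t.1 * D (map val t.2) + acc) 0 p.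
Lemma linFE p D : linF p D = lin p (fun u => D (map val u)).
Proof. by elim: p => [|t p IH]; rewrite ?lin_nil ?lin_cons //= IH. Qed.

Lemma eqc_nat p q : (forall D, linF p D = linF q D) -> eqc p q.
Proof.
move=> H w; rewrite !coefE.
have E : forall u : word, (u == w) = (map val u == map val w).
  by move=> u; rewrite (inj_eq (inj_map val_inj)).
rewrite (lin_ext _ (fun u => congr1 (fun b : bool => b%:R) (E u))).
rewrite (lin_ext q (fun u => congr1 (fun b : bool => b%:R) (E u))).
by rewrite -!(linFE _ (fun s => (s == map val w)%:R)) H.
Qed.

Lemma eqc_refl : Reflexive eqc. Proof. by move=> p w. Qed.
Lemma eqc_sym : Symmetric eqc. Proof. by move=> p q H w; rewrite H. Qed.
Lemma eqc_trans : Transitive eqc. Proof. by move=> p q r H1 H2 w; rewrite H1 H2. Qed.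
#[global] Instance eqc_Equiv : Equivalence eqc.
Proof. split; [exact eqc_refl|exact eqc_sym|exact eqc_trans]. Qed.

#[global] Instance faadd_Proper : Proper (eqc ==> eqc ==> eqc) (@faadd R).
Proof. move=> p p' E q q' F; apply: eqcP => D; by rewrite /faadd !lin_cat (lin_eqc _ E) (lin_eqc _ F). Qed.
#[global] Instance fascale_Proper c : Proper (eqc ==> eqc) (@fascale R c).
Proof. move=> p p' E; apply: eqcP => D; by rewrite !lin_scale (lin_eqc _ E). Qed.
#[global] Instance faopp_Proper : Proper (eqc ==> eqc) (@faopp R).
Proof. move=> p p' E; exact: fascale_Proper. Qed.
#[global] Instance fasub_Proper : Proper (eqc ==> eqc ==> eqc) (@fasub R).
Proof. move=> p p' E q q' F; rewrite /fasub; apply: faadd_Proper => //; exact: faopp_Proper. Qed.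
#[global] Instance famul_Proper : Proper (eqc ==> eqc ==> eqc) (@famul R).
Proof.
move=> p p' E q q' F; apply: eqcP => D; rewrite !lin_famul (lin_eqc _ E).
by apply: lin_ext => u; apply: lin_eqc.
Qed.
#[global] Instance twist_Proper i : Proper (eqc ==> eqc) (twist theta i).
Proof. move=> p p' E; apply: eqcP => D; by rewrite !lin_twist (lin_eqc _ E). Qed.
#[global] Instance fasum_Proper : Proper (pointwise_relation _ eqc ==> eqc) (@fasum R).
Proof. move=> F G E; apply: eqcP => D; rewrite !lin_fasum; apply: eq_bigr => k _; exact: lin_eqc. Qed.

Lemma lin_dA p k D : lin (dA theta p k) D = lin p (fun u => lin (dword theta u k) D).
Proof.
rewrite /dA lin_flatten big_map /lin; apply: eq_bigr => t _.
by rewrite -/(lin _ _) lin_scale.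
Qed.
Lemma dA_eqc p q k : eqc p q -> eqc (dA theta p k) (dA theta q k).
Proof. move=> E; apply: eqcP => D; by rewrite !lin_dA (lin_eqc _ E). Qed.

Definition gen (I : Type) (G : I -> FA) (s : seq (FA * I * FA)) : FA :=
  flatten [seq famul (famul t.1.1 (G t.1.2)) t.2 | t <- s].

Lemma in_idealE (I : Type) (G : I -> FA) p : in_ideal G p <-> exists s, eqc p (gen G s).
Proof. by []. Qed.

Lemma lin_gen (I : Type) (G : I -> FA) s D :
  lin (gen G s) D = \sum_(t <- s) lin (famul (famul t.1.1 (G t.1.2)) t.2) D.
Proof. by rewrite /gen lin_flatten big_map. Qed.

Section Ideal.
Variable I : Type.
Variable G : I -> FA.
Local Notation inI := (in_ideal G).

Lemma inI_eqc p q : eqc p q -> inI p -> inI q.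
Proof. by move=> E [s Hs]; exists s => w; rewrite -E Hs. Qed.
Lemma inI_nil : inI [::].
Proof. by exists [::]. Qed.
Lemma inI_0 p : eqc p [::] -> inI p.
Proof. move=> E; apply: inI_eqc inI_nil; by symmetry. Qed.
Lemma inI_add p q : inI p -> inI q -> inI (faadd p q).
Proof.
move=> [s1 H1] [s2 H2]; exists (s1 ++ s2).
apply: eqcP => D; by rewrite /faadd /gen map_cat flatten_cat !lin_cat (lin_eqc _ H1) (lin_eqc _ H2).
Qed.
Lemma inI_scale c p : inI p -> inI (fascale c p).
Proof.
move=> [s H]; exists [seq (fascale c t.1.1, t.1.2, t.2) | t <- s].
apply: eqcP => D; rewrite (lin_eqc _ (fascale_Proper c H)) lin_scale !lin_gen big_map mulr_sumr.
by apply: eq_bigr => t _; rewrite /= !lin_famul lin_scale.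
Qed.
Lemma inI_mull x p : inI p -> inI (famul x p).
Proof.
move=> [s H]; exists [seq (famul x t.1.1, t.1.2, t.2) | t <- s].
apply: eqcP => D; rewrite (lin_eqc _ (famul_Proper (eqc_refl x) H)) lin_famul lin_gen big_map.
under lin_ext => u do rewrite lin_gen.
rewrite lin_sum; apply: eq_bigr => t _ /=; rewrite !lin_famul.
apply: lin_ext => u; rewrite !lin_famul.
apply: lin_ext => v; apply: lin_ext => y; apply: lin_ext => z; by rewrite !catA.
Qed.
Lemma inI_mulr x p : inI p -> inI (famul p x).
Proof.
move=> [s H]; exists [seq (t.1.1, t.1.2, famul t.2 x) | t <- s].
apply: eqcP => D; rewrite (lin_eqc _ (famul_Proper H (eqc_refl x))) lin_famul !lin_gen big_map.
apply: eq_bigr => t _ /=; rewrite !lin_famul; apply: lin_ext => u.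
apply: lin_ext => v; rewrite lin_famul; apply: lin_ext => y; apply: lin_ext => z; by rewrite !catA.
Qed.
Lemma inI_gen k : inI (G k).
Proof.
exists [:: (fa1 R, k, fa1 R)]; apply: eqcP => D.
rewrite lin_flatten big_map big_seq1 /= !lin_famul /fa1 /faC lin_cons lin_nil addr0 /= mul1r.
apply: lin_ext => u; by rewrite lin_cons lin_nil addr0 mul1r cats0.
Qed.

Definition eqI p q := inI (fasub p q).
Lemma eqI_refl : Reflexive eqI.
Proof. move=> p; apply: inI_0; apply: eqcP => D; by rewrite /fasub /faopp lin_cat lin_scale lin_nil mulN1r addrN. Qed.
Lemma eqI_sym : Symmetric eqI.
Proof.
move=> p q H; apply: (inI_eqc _ (inI_scale (-1) H)); apply: eqcP => D.
by rewrite /fasub /faopp !lin_scale !lin_cat !lin_scale; ring.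
Qed.
Lemma eqI_trans : Transitive eqI.
Proof.
move=> p q r H1 H2; apply: (inI_eqc _ (inI_add H1 H2)); apply: eqcP => D.
by rewrite /fasub /faopp /faadd !lin_cat !lin_scale; ring.
Qed.
#[global] Instance eqI_Equiv : Equivalence eqI.
Proof. split; [exact eqI_refl|exact eqI_sym|exact eqI_trans]. Qed.
Lemma eqc_eqI p q : eqc p q -> eqI p q.
Proof. move=> E; apply: inI_0; apply: eqcP => D; by rewrite /fasub /faopp lin_cat lin_scale (lin_eqc _ E) lin_nil; ring. Qed.
#[global] Instance eqc_eqI_sub : subrelation eqc eqI.
Proof. move=> p q; exact: eqc_eqI. Qed.
#[global] Instance faadd_PI : Proper (eqI ==> eqI ==> eqI) (@faadd R).
Proof.
move=> p p' E q q' F; apply: (inI_eqc _ (inI_add E F)); apply: eqcP => D.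
by rewrite /fasub /faopp /faadd !lin_cat !lin_scale !lin_cat; ring.
Qed.
#[global] Instance fascale_PI c : Proper (eqI ==> eqI) (@fascale R c).
Proof.
move=> p p' E; apply: (inI_eqc _ (inI_scale c E)); apply: eqcP => D.
by rewrite /fasub /faopp /faadd !lin_cat !lin_scale !lin_cat !lin_scale; ring.
Qed.
#[global] Instance faopp_PI : Proper (eqI ==> eqI) (@faopp R).
Proof. move=> p p' E; exact: fascale_PI. Qed.
#[global] Instance fasub_PI : Proper (eqI ==> eqI ==> eqI) (@fasub R).
Proof. move=> p p' E q q' F; rewrite /fasub; apply: faadd_PI => //; exact: faopp_PI. Qed.
#[global] Instance famul_PI : Proper (eqI ==> eqI ==> eqI) (@famul R).
Proof.
move=> p p' E q q' F; apply: (inI_eqc _ (inI_add (inI_mulr q E) (inI_mull p' F))); apply: eqcP => D.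
rewrite /fasub /faopp /faadd !lin_cat !lin_scale !lin_famul !lin_cat !lin_scale.
rewrite (lin_ext p' (fun u => lin_cat _ _ _)) lin_add.
rewrite (lin_ext p' (fun u => lin_scale _ _ _)) lin_mulc; ring.
Qed.
End Ideal.

End S.

Notation o0 := (@Ordinal 4 0 isT).
Notation o1 := (@Ordinal 4 1 isT).
Notation o2 := (@Ordinal 4 2 isT).
Notation o3 := (@Ordinal 4 3 isT).

Lemma I4_ind (P : 'I_4 -> Type) : P o0 -> P o1 -> P o2 -> P o3 -> forall i, P i.
Proof.
move=> H0 H1 H2 H3 [[|[|[|[|m]]]] H] //.
- by rewrite (bool_irrelevance H isT).
- by rewrite (bool_irrelevance H isT).
- by rewrite (bool_irrelevance H isT).
- by rewrite (bool_irrelevance H isT).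
Qed.

Definition p2n (n : nat) : nat := match n with 0 => 2 | 1 => 3 | 2 => 0 | _ => 1 end%N.
Lemma p2n_lt (i : 'I_4) : (p2n i < 4)%N.
Proof. by case: i => [[|[|[|[|m]]]] H]. Qed.
Definition p2 (i : 'I_4) : 'I_4 := Ordinal (p2n_lt i).

Section S.
Variable R : realType.
Variable theta : R.
Local Notation C := (R[i]).
Local Notation FA := (FA R).

Lemma expiM (x : R) : expi x * expi (- x) = 1.
Proof.
rewrite /expi cosN sinN; apply/eqP; rewrite eq_complex /=; apply/andP; split; apply/eqP.
  by rewrite mulrN opprK -!expr2 cos2Dsin2.
by rewrite mulrN mulrC addNr.
Qed.
Lemma expi_neq0 (x : R) : expi x != 0.
Proof. by apply/eqP=> H; move: (expiM x); rewrite H mul0r => /eqP; rewrite eq_sym oner_eq0. Qed.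
Lemma expiN (x : R) : expi (- x) = (expi x)^-1.
Proof. by rewrite -[expi (-x)]mul1r -(mulVf (expi_neq0 x)) -mulrA expiM mulr1. Qed.

Lemma fasumE (F : 'I_4 -> FA) : fasum F = F o0 ++ F o1 ++ F o2 ++ F o3.
Proof.
rewrite /fasum !big_ord_recl big_ord0 cats0.
by congr (F _ ++ F _ ++ F _ ++ F _); apply: val_inj.
Qed.

Lemma fAE : fA R = fascale (1/2) (fasub (faadd (famul (faz R o0) (faz R o2)) (famul (faz R o1) (faz R o3))) (fa1 R)).
Proof. by rewrite /fA; congr (fascale _ (fasub (faadd (famul (faz _ _) (faz _ _)) (famul (faz _ _) (faz _ _))) _)); apply: val_inj; rewrite /= inordK. Qed.


End S.

Section S.
Variable R : realType.
Variable theta : R.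
Local Notation C := (R[i]).
Local Notation FA := (FA R).
Local Notation eqc := (@eqc R).
Implicit Types (p q r : FA) (D : word -> C) (c : C).

Lemma lin_fa1 D : lin (fa1 R) D = D [::].
Proof. by rewrite /fa1 /faC lin_cons lin_nil addr0 mul1r. Qed.
Lemma lin_fa0 D : lin (fa0 R) D = 0.
Proof. exact: lin_nil. Qed.
Lemma lin_faz k D : lin (faz R k) D = D [:: k].
Proof. by rewrite /faz lin_cons lin_nil addr0 mul1r. Qed.
Lemma lin_dzv k i D : lin (dzv R k i) D = (i == k)%:R * D [::].
Proof. by rewrite /dzv; case: eqP; rewrite ?lin_fa1 ?lin_fa0 ?mul1r ?mul0r. Qed.
Lemma sum4 (F : 'I_4 -> C) : \sum_(k < 4) F k = F o0 + F o1 + F o2 + F o3.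
Proof. rewrite !big_ord_recl big_ord0 addr0 !addrA.
by congr (F _ + F _ + F _ + F _); apply: val_inj. Qed.
Lemma lin_sub p q D : lin (fasub p q) D = lin p D - lin q D.
Proof. by rewrite /fasub /faadd /faopp lin_cat lin_scale mulN1r. Qed.
Lemma lin_opp p D : lin (faopp p) D = - lin p D.
Proof. by rewrite /faopp lin_scale mulN1r. Qed.

Lemma famulA p q r : eqc (famul (famul p q) r) (famul p (famul q r)).
Proof.
apply: eqcP => D; rewrite !lin_famul; apply: lin_ext => u; rewrite lin_famul.
apply: lin_ext => v; apply: lin_ext => w; by rewrite catA.
Qed.
Lemma famul_cat_l p q r : eqc (famul (p ++ q) r) (famul p r ++ famul q r).
Proof. by apply: eqcP => D; rewrite !lin_cat !lin_famul lin_cat. Qed.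
Lemma famul_cat_r p q r : eqc (famul p (q ++ r)) (famul p q ++ famul p r).
Proof.
apply: eqcP => D; rewrite !lin_cat !lin_famul -lin_add; apply: lin_ext => u.
by rewrite lin_cat.
Qed.
Lemma famul_nil_r p : eqc (famul p [::]) [::].
Proof. apply: eqcP => D; rewrite lin_famul lin_nil (lin_ext _ (fun u => lin_nil _)); exact: lin_0. Qed.
Lemma famul_scale_l c p q : eqc (famul (fascale c p) q) (fascale c (famul p q)).
Proof. by apply: eqcP => D; rewrite !lin_famul !lin_scale lin_famul. Qed.
Lemma famul_scale_r c p q : eqc (famul p (fascale c q)) (fascale c (famul p q)).
Proof.
apply: eqcP => D; rewrite lin_scale !lin_famul -lin_mulc; apply: lin_ext => u.
by rewrite lin_scale.
Qed.
Lemma famul_sub_r p q r : eqc (famul p (fasub q r)) (fasub (famul p q) (famul p r)).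
Proof.
apply: eqcP => D; rewrite !lin_sub !lin_famul (lin_ext _ (fun u => lin_sub _ _ _)).
by rewrite /lin -sumrB; apply: eq_bigr => t _; rewrite mulrBr.
Qed.
Lemma famul_fasum_l (F : 'I_4 -> FA) q : eqc (famul (fasum F) q) (fasum (fun a => famul (F a) q)).
Proof. apply: eqcP => D; rewrite lin_famul !lin_fasum; apply: eq_bigr => k _; by rewrite lin_famul. Qed.
Lemma fascale_fasum c (F : 'I_4 -> FA) : eqc (fascale c (fasum F)) (fasum (fun a => fascale c (F a))).
Proof. apply: eqcP => D; rewrite lin_scale !lin_fasum mulr_sumr; apply: eq_bigr => k _; by rewrite lin_scale. Qed.
Lemma fasub_fasum (F G : 'I_4 -> FA) : eqc (fasub (fasum F) (fasum G)) (fasum (fun a => fasub (F a) (G a))).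
Proof. apply: eqcP => D; rewrite lin_sub !lin_fasum -sumrB; apply: eq_bigr => k _; by rewrite lin_sub. Qed.
Lemma famul1r p : eqc (famul p (fa1 R)) p.
Proof. apply: eqcP => D; rewrite lin_famul; apply: lin_ext => u; by rewrite lin_fa1 cats0. Qed.
Lemma famul1l p : eqc (famul (fa1 R) p) p.
Proof. by apply: eqcP => D; rewrite lin_famul lin_fa1. Qed.

Lemma fasum_delta (F : 'I_4 -> FA) i : eqc (fasum (fun a => famul (F a) (dzv R a i))) (F i).
Proof.
apply: eqcP => D; rewrite lin_fasum (bigD1 i) //= big1 ?addr0.
  rewrite lin_famul; apply: lin_ext => u; by rewrite lin_dzv eqxx mul1r cats0.
move=> k ki; rewrite lin_famul (lin_ext _ (fun u => lin_dzv _ _ _)) eq_sym (negbTE ki) /=.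
rewrite (lin_ext _ (fun u => mul0r _)); exact: lin_0.
Qed.
Lemma lin_twist_dzv k i j D : lin (twist theta i (dzv R k j)) D = (j == k)%:R * D [::].
Proof. by rewrite lin_twist lin_dzv big_nil mul1r. Qed.
Lemma fasum_dzv_tw (F : 'I_4 -> FA) i j :
  eqc (fasum (fun a => famul (F a) (twist theta i (dzv R a j)))) (F j).
Proof.
apply: eqcP => D; rewrite lin_fasum (bigD1 j) //= big1 ?addr0.
  rewrite lin_famul; apply: lin_ext => u; by rewrite lin_twist_dzv eqxx mul1r cats0.
move=> k ki; rewrite lin_famul (lin_ext _ (fun u => lin_twist_dzv _ _ _ _)) eq_sym (negbTE ki) /=.
rewrite (lin_ext _ (fun u => mul0r _)); exact: lin_0.
Qed.
Lemma fasum_pick (F : 'I_4 -> FA) i : (forall a, a != i -> eqc (F a) [::]) -> eqc (fasum F) (F i).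
Proof.
move=> H; apply: eqcP => D; rewrite lin_fasum (bigD1 i) //= big1 ?addr0 // => k ki.
by rewrite (lin_eqc _ (H k ki)) lin_nil.
Qed.
End S.

Ltac step := try rewrite /ginv; try rewrite /Pi; try rewrite /sub1; try rewrite /lmul1; try rewrite /tens;
  try rewrite /sum2; try rewrite /lmul2; try rewrite /nabla; try rewrite /piL; try rewrite /piR;
  rewrite ?fasumE; try rewrite /nu; try rewrite fAE; rewrite /=.
Ltac conc0 := apply: eqc_nat => D; do 4 step; rewrite ?big_cons ?big_nil; try rewrite /Rm; try rewrite /ginvC; try rewrite /gC; try rewrite /Pm; rewrite /= ?expiN ?inordK //.
Ltac conc := conc0; (field; exact: expi_neq0) || ring.


Section S.
Variable R : realType.
Variable theta : R.
Local Notation C := (R[i]).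
Local Notation FA := (FA R).
Local Notation eqc := (@eqc R).
Implicit Types (p q r : FA) (D : word -> C) (c : C).

Lemma ginv_nu_c a : eqc (fasum (fun b => fascale (ginvC R a b) (twist theta a (nu theta b)))) (faz R a).
Proof. elim/I4_ind: a; conc. Qed.

Lemma pull (c : 'I_4 -> C) P (T : 'I_4 -> FA) :
  eqc (fasum (fun b => fascale (c b) (famul P (T b)))) (famul P (fasum (fun b => fascale (c b) (T b)))).
Proof.
apply: eqcP => D; rewrite lin_famul lin_fasum.
under lin_ext => u do rewrite lin_fasum.
rewrite lin_sum; apply: eq_bigr => b _; rewrite lin_scale lin_famul -lin_mulc.
by apply: lin_ext => u; rewrite lin_scale.
Qed.

Lemma ginv_nu (w : Om1 R) : eqc (ginv (tens theta w (nu theta))) (fasum (fun a => famul (w a) (faz R a))).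
Proof.
apply: fasum_Proper => a /=.
etransitivity; first exact: (pull (fun b => ginvC R a b) (w a) (fun b => twist theta a (nu theta b))).
apply: famul_Proper; [reflexivity|exact: ginv_nu_c].
Qed.

Definition KL (i a : 'I_4) : FA := fasub (dzv R a i) (famul (faz R a) (nu theta i)).
Definition KR (i j b : 'I_4) : FA := twist theta i (Pi theta (dzv R b) j).

Lemma Pi_canon (w : Om1 R) i : eqc (Pi theta w i) (fasum (fun a => famul (w a) (KL i a))).
Proof.
rewrite /Pi /sub1 /lmul1.
symmetry.
etransitivity. { apply: fasum_Proper => a /=; exact: famul_sub_r. }
etransitivity; first by symmetry; exact: fasub_fasum.
apply: fasub_Proper; first exact: fasum_delta.
symmetry.
etransitivity. { apply: famul_Proper; [exact: ginv_nu | reflexivity]. }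
etransitivity; first exact: famul_fasum_l.
apply: fasum_Proper => a /=; exact: famulA.
Qed.

Lemma piL_canon (X : Om2 R) i j : eqc (piL theta X i j) (fasum (fun a => famul (X a j) (KL i a))).
Proof.
etransitivity; first exact: (fasum_dzv_tw theta (fun j0 => Pi theta (fun k => X k j0) i) i j).
exact: (Pi_canon (fun k => X k j) i).
Qed.

Lemma piR_canon (Y : Om2 R) i j : eqc (piR theta Y i j) (fasum (fun b => famul (Y i b) (KR i j b))).
Proof.
etransitivity.
  apply: (@fasum_pick R (fun a => fasum (fun b => famul (Y a b) (famul (dzv R a i) (twist theta i (Pi theta (dzv R b) j))))) i).
  move=> a ai; rewrite /dzv eq_sym (negbTE ai).
  etransitivity. { apply: fasum_Proper => b /=. etransitivity; last exact: (famul_nil_r (Y a b)). reflexivity. }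
  by rewrite fasumE.
apply: fasum_Proper => b /=; apply: famul_Proper; first reflexivity.
rewrite /dzv eqxx; exact: famul1l.
Qed.

End S.


Section S.
Variable R : realType.
Variable theta : R.
Local Notation C := (R[i]).
Local Notation FA := (FA R).
Local Notation eqc := (@eqc R).
Local Notation eqIA := (eqI (relA theta)).
Implicit Types (p q r : FA) (D : word -> C) (c : C).

Definition mono (u : word) : FA := [:: (1, u)].
Lemma lin_mono u D : lin (mono u) D = D u.
Proof. by rewrite /mono lin_cons lin_nil addr0 mul1r. Qed.

Lemma lin_single c u D : lin [:: (c, u)] D = c * D u.
Proof. by rewrite lin_cons lin_nil addr0. Qed.

Lemma eqI_cat p p' q q' : eqIA p p' -> eqIA q q' -> eqIA (p ++ q) (p' ++ q').
Proof. move=> H1 H2; exact: (@faadd_PI R _ (relA theta) p p' H1 q q' H2). Qed.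

Lemma rel_swap m l : eqIA (famul (faz R m) (faz R l)) (fascale (Rm theta l m) (famul (faz R l) (faz R m))).
Proof. exact: (inI_gen (relA theta) (m, l)). Qed.

Lemma mono_comm m u : eqIA (mono (m :: u)) (fascale (\prod_(l <- u) Rm theta l m) (mono (u ++ [:: m]))).
Proof.
elim: u => [|l u IH].
  apply: eqc_eqI; apply: eqcP => D; by rewrite lin_scale !lin_mono big_nil mul1r.
etransitivity.
  apply: eqc_eqI; apply: (_ : eqc _ (famul (famul (faz R m) (faz R l)) (mono u))).
  apply: eqcP => D; by rewrite /mono /famul /faz /= !lin_single !mul1r.
etransitivity; first by apply: famul_PI; [exact: rel_swap|reflexivity].
etransitivity.
  apply: eqc_eqI; apply: (_ : eqc _ (fascale (Rm theta l m) (famul (faz R l) (mono (m :: u))))).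
  apply: eqcP => D; rewrite /mono /famul /faz /fascale /= !lin_single; ring.
etransitivity; first by apply: fascale_PI; apply: famul_PI; [reflexivity|exact: IH].
apply: eqc_eqI; apply: eqcP => D.
rewrite /mono /famul /faz /fascale /= !lin_single big_cons; ring.
Qed.

Lemma comm m p : eqIA (famul (faz R m) p) (famul (twist theta m p) (faz R m)).
Proof.
elim: p => [|t p IH].
  by apply: eqc_eqI; rewrite famul_nil_r.
etransitivity.
  apply: eqc_eqI; exact: (famul_cat_r (faz R m) [:: t] p).
symmetry; etransitivity.
  apply: eqc_eqI; exact: (famul_cat_l (twist theta m [:: t]) (twist theta m p) (faz R m)).
symmetry; apply: eqI_cat => //.
case: t => c u.
etransitivity.
  apply: eqc_eqI; apply: (_ : eqc _ (fascale c (mono (m :: u)))).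
  apply: eqcP => D; rewrite /mono /famul /faz /fascale /= !lin_single; ring.
etransitivity; first by apply: fascale_PI; exact: mono_comm.
apply: eqc_eqI; apply: eqcP => D.
rewrite /mono /famul /faz /fascale /twist /= !lin_single; ring.
Qed.

Lemma Rm_p2 l i : Rm theta l i * Rm theta l (p2 i) = 1.
Proof.
elim/I4_ind: l; elim/I4_ind: i; rewrite /p2 /Rm /= ?expiN; (field; exact: expi_neq0) || ring.
Qed.

Lemma twist_p2 i p : eqc (twist theta (p2 i) (twist theta i p)) p.
Proof.
apply: eqcP => D; rewrite !lin_twist; apply: lin_ext => u.
rewrite mulrA -big_split /= big1_seq ?mul1r // => l _; by rewrite Rm_p2.
Qed.

Lemma nuE' k : eqc (nu theta k) (fascale (1/2) (faz R (p2 k))).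
Proof. elim/I4_ind: k; conc. Qed.
Lemma K1 i j : eqc (fascale (Rm theta i j) (twist theta j (nu theta i))) (fascale (1/2) (faz R (p2 i))).
Proof. elim/I4_ind: i; elim/I4_ind: j; conc. Qed.
Lemma K2 i j : eqc (twist theta i (nu theta j)) (fascale (Rm theta i j) (fascale (1/2) (faz R (p2 j)))).
Proof. elim/I4_ind: i; elim/I4_ind: j; conc. Qed.

End S.


Section S.
Variable R : realType.
Variable theta : R.
Lemma CA2a i j a : eqc (fascale (Rm theta i j) (KL theta j a)) (fascale (Rm theta i a) (KR theta i j a)).
Proof. rewrite /KL /KR. elim/I4_ind: i; elim/I4_ind: j; elim/I4_ind: a. all: conc. Qed.
End S.


Section S.
Variable R : realType.
Variable theta : R.
Lemma CA2b i j b : eqc (fascale (Rm theta i j) (KR theta j i b)) (fascale (Rm theta b j) (KL theta i b)).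
Proof. rewrite /KL /KR. elim/I4_ind: i; elim/I4_ind: j; elim/I4_ind: b. all: conc. Qed.
End S.

Section S.
Variable R : realType.
Variable theta : R.
Local Notation C := (R[i]).
Local Notation FA := (FA R).
Local Notation eqc := (@eqc R).
Local Notation eqIA := (eqI (relA theta)).
Implicit Types (p q r : FA) (D : word -> C) (c : C).

Lemma A1a (w : Om1 R) i j : eqA theta (sigma theta (tens theta w (nu theta)) i j) (tens theta (nu theta) w i j).
Proof.
change (eqIA (fascale (Rm theta i j) (famul (w j) (twist theta j (nu theta i))))
             (famul (nu theta i) (twist theta i (w j)))).
transitivity (fascale (1/2) (famul (w j) (faz R (p2 i)))).
  apply: eqc_eqI.
  rewrite -famul_scale_r K1 famul_scale_r. reflexivity.
rewrite (nuE' theta i) famul_scale_l.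
rewrite (comm theta (p2 i)) twist_p2. reflexivity.
Qed.


Lemma A1b (w : Om1 R) i j : eqA theta (sigma theta (tens theta (nu theta) w) i j) (tens theta w (nu theta) i j).
Proof.
change (eqIA (fascale (Rm theta i j) (famul (nu theta j) (twist theta j (w i))))
             (famul (w i) (twist theta i (nu theta j)))).
rewrite K2 !famul_scale_r.
rewrite (nuE' theta j) famul_scale_l (comm theta (p2 j)) twist_p2. reflexivity.
Qed.

Lemma A2a (X : Om2 R) i j : eqc (sigma theta (piL theta X) i j) (piR theta (sigma theta X) i j).
Proof.
rewrite /sigma piL_canon piR_canon fascale_fasum.
apply: fasum_Proper => a /=.
rewrite famul_scale_l -!famul_scale_r CA2a. reflexivity.
Qed.

Lemma A2b (X : Om2 R) i j : eqc (sigma theta (piR theta X) i j) (piL theta (sigma theta X) i j).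
Proof.
rewrite /sigma piL_canon piR_canon fascale_fasum.
apply: fasum_Proper => a /=.
rewrite famul_scale_l -!famul_scale_r CA2b. reflexivity.
Qed.

End S.

Section S.
Variable R : realType.
Variable theta : R.
Local Notation C := (R[i]).
Local Notation FA := (FA R).
Local Notation eqc := (@eqc R).
Local Notation eqIB := (eqI (relB theta)).
Implicit Types (p q r : FA) (D : word -> C) (c : C).

Lemma eqBB_of (X Y : Om2 R) : (forall i j, eqc (X i j) (Y i j)) -> eqBB theta X Y.
Proof.
move=> H; exists (fun _ => [::]), (fun _ => [::]) => i j.
change (eqIB (fasub (X i j) (Y i j)) (faadd (famul (nu theta i) [::]) [::])).
apply: eqc_eqI; rewrite (H i j) famul_nil_r.
apply: eqcP => D; by rewrite lin_sub /faadd lin_cat !lin_nil subrr addr0.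
Qed.

Lemma sigmaB_ok i j : eqBB theta (sigmaB theta (tens theta (dzv R i) (dzv R j)))
        (scale2 (Rm theta j i) (tens theta (dzv R j) (dzv R i))).
Proof.
apply: eqBB_of => m k; apply: eqcP => D.
rewrite /sigmaB /sigma /scale2 /tens !lin_scale !lin_famul !lin_dzv /= !lin_twist_dzv.
case: (eqVneq k i) => [->|_]; case: (eqVneq m j) => [->|_] //=; ring.
Qed.

Lemma gB_ok : eqBB theta (gB R)
       (sum2 (fun i => sum2 (fun j =>
          scale2 (gC R i j) (tens theta (dzv R i) (dzv R j))))).
Proof.
apply: eqBB_of => i j; rewrite /gB /gT /scale2.
elim/I4_ind: i; elim/I4_ind: j; conc.
Qed.


Definition PiD (i k : 'I_4) : FA := fasub (dzv R i k) (fascale (1/2) (famul (faz R i) (faz R (p2 k)))).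
Lemma PiDE i k : eqc (Pi theta (dzv R i) k) (PiD i k).
Proof. rewrite /PiD; elim/I4_ind: i; elim/I4_ind: k; conc. Qed.

Lemma ginv_tens_P (w w' v v' : Om1 R) : (forall k, eqc (w k) (w' k)) -> (forall k, eqc (v k) (v' k)) ->
  eqc (ginv (tens theta w v)) (ginv (tens theta w' v')).
Proof.
move=> Hw Hv; apply: fasum_Proper => a; apply: fasum_Proper => b /=.
by rewrite /tens (Hw a) (Hv b).
Qed.

Definition wit (i j : 'I_4) : seq (FA * option ('I_4 * 'I_4) * FA) :=
  [:: (fa1 R, Some (i, j), fa1 R);
      (fascale (Rm theta j o0 / 2) (faz R i), Some (p2 o0, j), faz R o0);
      (fascale (Rm theta j o1 / 2) (faz R i), Some (p2 o1, j), faz R o1);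
      (fascale (Rm theta j o2 / 2) (faz R i), Some (p2 o2, j), faz R o2);
      (fascale (Rm theta j o3 / 2) (faz R i), Some (p2 o3, j), faz R o3);
      (fascale 2 (famul (faz R i) (faz R j)), None, fa1 R);
      (fascale (1/2) (famul (faz R i) (faz R j)), Some (o2, o0), fa1 R);
      (fascale (1/2) (famul (faz R i) (faz R j)), Some (o3, o1), fa1 R)].

Lemma gBinv_ok i j : eqB theta (gBinv theta (dzv R i) (dzv R j))
                (fasub (faC (ginvC R i j)) (famul (faz R i) (faz R j))).
Proof.
change (eqIB (ginv (tens theta (Pi theta (dzv R i)) (Pi theta (dzv R j))))
             (fasub (faC (ginvC R i j)) (famul (faz R i) (faz R j)))).
rewrite (ginv_tens_P (PiDE i) (PiDE j)).
exists (wit i j); rewrite /PiD /wit.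
elim/I4_ind: i; elim/I4_ind: j. all: conc.
Qed.

End S.

Section S.
Variable R : realType.
Variable theta : R.
Local Notation C := (R[i]).
Local Notation FA := (FA R).
Local Notation eqc := (@eqc R).
Local Notation eqIB := (eqI (relB theta)).

Lemma nablaB_ok i : eqBB theta (nablaB theta (dzv R i))
        (lmul2 (faopp (faz R i))
           (sum2 (fun k => sum2 (fun l =>
              scale2 (gC R k l) (tens theta (dzv R k) (dzv R l)))))).
Proof.
exists (fun m => faopp (dzv R i m)), (fun _ => [::]) => m k.
apply: eqc_eqI.
have E : eqc (nablaB theta (dzv R i) m k) (dA theta (PiD R i k) m).
  etransitivity; first exact: (fasum_dzv_tw theta (fun k0 => dA theta (Pi theta (dzv R i) k0) m) m k).
  exact: (dA_eqc theta m (PiDE theta i k)).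
rewrite E /PiD /lmul2 /scale2; clear E.
elim/I4_ind: i; elim/I4_ind: m; elim/I4_ind: k. all: conc.
Qed.
End S.

Theorem proposition4p8 (R : realType) (theta : R) :
  (* (A1) *)
  (forall w : Om1 R,
      eqO2A theta (sigma theta (tens theta w (nu theta))) (tens theta (nu theta) w)
   /\ eqO2A theta (sigma theta (tens theta (nu theta) w)) (tens theta w (nu theta)))
  (* (A2) *)
  /\ (forall X : Om2 R,
      eqQ theta (sigma theta (piL theta X)) (piR theta (sigma theta X))
   /\ eqQ theta (sigma theta (piR theta X)) (piL theta (sigma theta X)))
  (* g_B *)
  /\ eqBB theta (gB R)
       (sum2 (fun i => sum2 (fun j =>
          scale2 (gC R i j) (tens theta (dzv R i) (dzv R j)))))
  (* g_B^{-1} *)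
  /\ (forall i j : 'I_4,
      eqB theta (gBinv theta (dzv R i) (dzv R j))
                (fasub (faC (ginvC R i j)) (famul (faz R i) (faz R j))))
  (* nabla_B *)
  /\ (forall i : 'I_4,
      eqBB theta (nablaB theta (dzv R i))
        (lmul2 (faopp (faz R i))
           (sum2 (fun k => sum2 (fun l =>
              scale2 (gC R k l) (tens theta (dzv R k) (dzv R l)))))))
  (* sigma_B *)
  /\ (forall i j : 'I_4,
      eqBB theta (sigmaB theta (tens theta (dzv R i) (dzv R j)))
        (scale2 (Rm theta j i) (tens theta (dzv R j) (dzv R i)))).
Proof.
split; first by move=> w; split=> i j; [exact: A1a | exact: A1b].
split; first by move=> X; split=> i j; apply: eqc_eqI; [exact: A2a | exact: A2b].
split; first exact: gB_ok.
split; first exact: gBinv_ok.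
split; first exact: nablaB_ok.
exact: sigmaB_ok.
Qed.
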